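(* Let $1\le t\le k$ be integers and let $0\le\alpha<\frac{t+1}{k+1}$. Then there exists an election $(V,A,\succ)$ with $|A|\ge k$ such that no set $C\subseteq A$ with $|C|=k$ is $(t,\alpha)$-undominated.
   Context: An election $(V,A,\succ)$: finite nonempty voter set $V$ with $n=|V|$, finite candidate set $A$, and for each voter $v$ a strict linear order $\succ_v$ on $A$. For a voter $v$, a set $C\subseteq A$ with $|C|\ge t$ and $a\in A\setminus C$: $C\succ_v^t a$ iff $|\{c\in C: c\succ_v a\}|\ge t$; otherwise we write $a\succ_v^t C$. A set $C\subseteq A$ is $(t,\alpha)$-undominated if $|C|\ge t$ and for every $a\in A\setminus C$, $|\{v\in V: a\succ_v^t C\}|\le\lfloor\alpha n\rfloor$. *)

(* Defs.v *)
From HB Require Import structures.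
From mathcomp Require Import all_boot all_order all_algebra.
From mathcomp Require Import reals.
Set Implicit Arguments. Unset Strict Implicit. Unset Printing Implicit Defensive.
Import Order.TTheory GRing.Theory Num.Theory.

Definition strict_linear_order (A : finType) (r : rel A) : Prop :=
  irreflexive r /\ transitive r /\ (forall x y : A, x != y -> r x y || r y x).

(* C >_v^t a : at least t members of C are ranked above a by voter v.
   pref v x y means x >_v y. *)
Definition beats_t (V A : finType) (pref : V -> rel A) (t : nat)
    (v : V) (C : {set A}) (a : A) : bool :=
  t <= #|[set c in C | pref v c a]|.

(* (t,alpha)-undominated: |C| >= t and for every a outside C, the number of
   voters with a >_v^t C (i.e. not C >_v^t a) is at most floor(alpha * n). *)
Definition undominated (R : realType) (V A : finType) (pref : V -> rel A)
    (t : nat) (alpha : R) (C : {set A}) : Prop :=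
  t <= #|C| /\
  forall a : A, a \notin C ->
    (#|[set v : V | ~~ beats_t pref t v C a]|%:Z <= Num.floor (alpha * #|V|%:R))%R.

(* Main.v *)
Require Import Defs.
From HB Require Import structures.
From mathcomp Require Import all_boot all_order all_algebra.
From mathcomp Require Import reals.
From mathcomp Require Import zify lra.
Import Order.TTheory GRing.Theory Num.Theory.

Set Implicit Arguments. Unset Strict Implicit. Unset Printing Implicit Defensive.

Definition rd (M j i : nat) : nat := if j <= i then i - j else i + M - j.
Definition rot (M j e : nat) : nat := if j + e < M then j + e else j + e - M.

Lemma rd_lt M j i : j < M -> i < M -> rd M j i < M.
Proof. rewrite /rd /rot; repeat (case: ifP => ?); lia. Qed.
Lemma rot_lt M j e : j < M -> e < M -> rot M j e < M.
Proof. rewrite /rot => *; repeat (case: ifP => ?); lia. Qed.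
Lemma rd_rot M j e : j < M -> e < M -> rd M j (rot M j e) = e.
Proof. rewrite /rot => *; case: ifP => ?; rewrite /rd; repeat (case: ifP => ?); lia. Qed.
Lemma rd_inj M j a b : j < M -> a < M -> b < M -> rd M j a = rd M j b -> a = b.
Proof. rewrite /rd /rot; repeat (case: ifP => ?); lia. Qed.
Lemma rd_sub M a b c : a < M -> b < M -> c < M -> rd M a b <= rd M a c ->
  rd M b c = rd M a c - rd M a b.
Proof. rewrite /rd /rot; repeat (case: ifP => ?); lia. Qed.
Lemma rd_add M a b c : a < M -> b < M -> c < M -> rd M a b + rd M b c < M ->
  rd M a c = rd M a b + rd M b c.
Proof. rewrite /rd /rot; repeat (case: ifP => ?); lia. Qed.
Lemma rd_succ M v q : 1 < M -> v < M -> q < M -> v != rot M q 1 ->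
  rd M v (rot M q 1) = (rd M v q).+1.
Proof. rewrite /rot; case: ifP => ?; rewrite /rd; repeat (case: ifP => ?); lia. Qed.
Lemma rd_self M j : rd M j j = 0.
Proof. by rewrite /rd leqnn subnn. Qed.
Lemma rot_rd M j i : j < M -> i < M -> rot M j (rd M j i) = i.
Proof. rewrite /rd; case: ifP => ?; rewrite /rot; case: ifP => ?; lia. Qed.

Lemma kappa_le M a b x y : x < M -> y < M -> a * M + (M - 1 - x) <= b * M + (M - 1 - y) ->
  a <= b /\ (a = b -> y <= x).
Proof.
move=> hx hy h; split.
  rewrite leqNgt; apply/negP => hab.
  have : b.+1 * M <= a * M by rewrite leq_mul2r hab orbT.
  rewrite mulSn; lia.
move=> eab; subst; lia.
Qed.

Lemma sum_sub_le M (n : 'I_M -> nat) (P : pred 'I_M) :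
  \sum_(l | P l) n l <= \sum_l n l.
Proof.
rewrite [X in _ <= X](bigID P) /=; exact: leq_addr.
Qed.

Lemma cycle_lemma k (n : 'I_k.+1 -> nat) : \sum_l n l = k ->
  exists j0 : 'I_k.+1, forall d, 0 < d <= k.+1 ->
    \sum_(l : 'I_k.+1 | rd k.+1 j0 l < d) n l < d.
Proof.
move=> hsum.
set M := k.+1.
pose P0 (x : nat) := \sum_(l : 'I_M | nat_of_ord l < x) n l.
have P0le x : P0 x <= k by rewrite -hsum; apply: sum_sub_le.
pose H (j : 'I_M) := j + k - P0 j.
pose kap (j : 'I_M) := H j * M + (M - 1 - j).
have [j0 _ hmin] := arg_minnP kap (isT : predT (ord0 : 'I_M)).
have hH : forall j : 'I_M, H j0 <= H j /\ (H j0 = H j -> j <= j0).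
  move=> j; apply: kappa_le; [exact: ltn_ord | exact: ltn_ord | exact: hmin].
exists j0 => d /andP [d0 dM].
have hj0 := ltn_ord j0.
case: (leqP (j0 + d) M) => hjd.
- have e : P0 (j0 + d) = P0 j0 + \sum_(l : 'I_M | rd M j0 l < d) n l.
    rewrite /P0 (bigID (fun l : 'I_M => l < j0)) /=; congr (_ + _); apply: eq_bigl => l.
      by apply/idP/idP; [case/andP | move=> h; apply/andP; split=> //; lia].
    have hl := ltn_ord l.
    rewrite /rd; apply/idP/idP.
      by case/andP => h1 h2; rewrite ifT; lia.
    by case: ifP => h1 h2; apply/andP; split; lia.
  case: (ltnP (j0 + d) M) => hlt.
  + have [h1 h2] := hH (Ordinal hlt).
    have h3 : H j0 < H (Ordinal hlt).
      rewrite ltn_neqAle h1 andbT; apply/eqP => /h2 /=; lia.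
    move: h3; rewrite /H /=.
    move: e; have := P0le j0; have := P0le (j0 + d); idtac.
    move: (P0 j0) (P0 (j0 + d)) (\sum_(l < M | rd M j0 l < d) n l) => A B S; lia.
  + have hd : j0 + d = M by lia.
    have : P0 M = k.
      rewrite /P0 -hsum; apply: eq_bigl => l; exact: ltn_ord.
    have [h1 _] := hH ord0.
    move: h1; rewrite /H /=.
    have -> : P0 0 = 0 by rewrite /P0 big_pred0.
    move: e; rewrite hd; have := P0le j0; move: (P0 j0) (P0 M) (\sum_(l < M | rd M j0 l < d) n l) (P0 0) => A B S Z; lia.
- have hd' : j0 + d - M < M by lia.
  have e : \sum_(l : 'I_M | rd M j0 l < d) n l = P0 (j0 + d - M) + (k - P0 j0).
    have -> : k - P0 j0 = \sum_(l : 'I_M | ~~ (l < j0)) n l.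
      by rewrite -hsum /P0 [X in X - _](bigID (fun l : 'I_M => l < j0)) /= addKn.
    rewrite (bigID (fun l : 'I_M => l < j0)) /=; congr (_ + _); apply: eq_bigl => l;
      have hl := ltn_ord l; rewrite /rd.
      apply/idP/idP.
        by case/andP; case: ifP => h1 h2 h3; lia.
      by move=> h; apply/andP; split; [case: ifP => h1; lia | lia].
    apply/idP/idP.
      by case/andP; case: ifP => h1 h2 h3; lia.
    by move=> h; apply/andP; split; [case: ifP => h1; lia | lia].
  rewrite e.
  have [h1 _] := hH (Ordinal hd').
  move: h1; rewrite /H /=.
  have := P0le j0; have := P0le (j0 + d - M); move: (P0 j0) (P0 (j0 + d - M)) => A B; lia.
Qed.

Unset Implicit Arguments.

Section El.
Variables (M N : nat).
Definition key (w x : 'I_M * 'I_N) : nat := rd M w.1 x.1 * N + rd N w.2 x.2.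
Definition pref (w : 'I_M * 'I_N) : rel ('I_M * 'I_N) := fun x y => key w x < key w y.

Lemma divmod_inj a b c d : b < N -> d < N -> a * N + b = c * N + d -> a = c /\ b = d.
Proof.
move=> hb hd e.
have N0 : 0 < N by lia.
have e1 := congr1 (fun x => x %/ N) e; have e2 := congr1 (fun x => x %% N) e.
rewrite /= !divnMDl // !modnMDl !divn_small // !modn_small // !addn0 in e1 e2.
by [].
Qed.

Lemma key_inj w x y : key w x = key w y -> x = y.
Proof.
case: w x y => [j v] [i p] [i' p']; rewrite /key /=.
move/divmod_inj => [].
  exact: rd_lt. exact: rd_lt.
move=> /rd_inj h1 /rd_inj h2.
have e1 : i = i' by apply: val_inj; apply: h1.
have e2 : p = p' by apply: val_inj; apply: h2.
by rewrite e1 e2.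
Qed.

Lemma pref_slo w : strict_linear_order (pref w).
Proof.
split; first by move=> x; exact: ltnn.
split; first by move=> y x z; exact: ltn_trans.
move=> x y hxy; rewrite /pref.
case: (ltngtP (key w x) (key w y)) => // /key_inj e.
by rewrite e eqxx in hxy.
Qed.
End El.

Set Implicit Arguments.

Lemma card_cl M N (C : {set 'I_M * 'I_N}) (P : pred 'I_M) :
  #|[set c in C | P c.1]| = \sum_(l | P l) #|[set c in C | c.1 == l]|.
Proof.
rewrite -sum1_card (partition_big (fun c : 'I_M * 'I_N => c.1) P) /=; last first.
  by move=> c; rewrite inE => /andP [].
apply: eq_bigr => l Pl; rewrite -sum1_card; apply: eq_bigl => c.
rewrite !inE; apply/idP/idP.
  by case/andP => /andP [-> _] ->.
by case/andP => -> /eqP e; rewrite e Pl eqxx.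
Qed.

Lemma bad_bound t k N (C : {set 'I_k.+1 * 'I_N}) :
  1 <= t -> t <= k -> k.+1 < N -> #|C| = k ->
  exists a, a \notin C /\
    (t.+1 * N.-1 <= #|[set w | ~~ beats_t (@pref k.+1 N) t w C a]|).
Proof.
move=> t1 tk kN hC.
set M := k.+1.
pose n (l : 'I_M) := #|[set c in C | c.1 == l]|.
have hsum : \sum_l n l = k.
  rewrite -hC -(card_cl C predT); apply: eq_card => c; by rewrite !inE andbT.
have [j0 hj0] := cycle_lemma hsum.
have tM : t < M by rewrite /M; lia.
have ilt : rot M j0 t < M by apply: rot_lt.
pose i := Ordinal ilt.
have rdi : rd M j0 i = t by apply: rd_rot.
have N1 : 1 < N by lia.
have sqlt : forall q : 'I_N, rot N q 1 < N by move=> q; apply: rot_lt.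
pose sq (q : 'I_N) := Ordinal (sqlt q).
have [p0 hp0] : exists p0 : 'I_N, (i, p0) \notin C.
  case: (pickP (fun p : 'I_N => (i,p) \notin C)) => [p0 h | hall]; first by exists p0.
  exfalso.
  have : #|[set (i, p) | p : 'I_N]| <= n i.
    apply: subset_leq_card; apply/subsetP => c /imsetP [p _ ->].
    by rewrite inE /= eqxx andbT; move: (hall p) => /= /negbFE.
  rewrite card_imset ?card_ord; last by move=> p p' [].
  have : n i <= #|C| by apply: subset_leq_card; apply/subsetP => c; rewrite inE => /andP [].
  lia.
have [q [hq1 hq2]] : exists q : 'I_N, (i,q) \notin C /\ (0 < n i -> (i, sq q) \in C).
  case: (posnP (n i)) => [n0 | npos]; first by exists p0; split=> //; rewrite n0.
  have [c] := card_gt0P npos; rewrite inE => /andP [cC /eqP c1].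
  have ic : (i, c.2) \in C by rewrite -c1 -surjective_pairing.
  have [p1 hp1 hmin] := @arg_minnP _ c.2 (fun p : 'I_N => (i,p) \in C) (fun p : 'I_N => rd N p0 p) ic.
  have hp01 : 0 < rd N p0 p1.
    rewrite lt0n; apply/negP => /eqP h.
    have : p1 = p0.
      apply: val_inj; apply: (@rd_inj N p0); rewrite ?ltn_ord // h rd_self //.
    by move=> e; rewrite e (negbTE hp0) in hp1.
  have qlt : rot N p0 (rd N p0 p1 - 1) < N.
    apply: rot_lt => //; have := @rd_lt N p0 p1 (ltn_ord _) (ltn_ord _); lia.
  have rdp1 := @rd_lt N p0 p1 (ltn_ord _) (ltn_ord _).
  have rdq : rd N p0 (Ordinal qlt) = rd N p0 p1 - 1 by rewrite /= rd_rot //; lia.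
  exists (Ordinal qlt); split.
    apply/negP => /hmin /=; rewrite rdq; lia.
  move=> _; suff -> : sq (Ordinal qlt) = p1 by [].
  apply: val_inj; apply: (@rd_inj N p0); rewrite ?ltn_ord //=.
  have rdq0 : rd N p0 (rot N p0 (rd N p0 p1 - 1)) = rd N p0 p1 - 1 by rewrite rd_rot //; lia.
  have rl : rot N (rot N p0 (rd N p0 p1 - 1)) 1 < N by apply: rot_lt.
  rewrite (@rd_add N p0 (rot N p0 (rd N p0 p1 - 1))) ?ltn_ord //; rewrite ?rdq0 ?rd_rot //; lia.
exists (i, q); split => //.
set sqq := sq q.
have iM : i < M := ltn_ord i.
have j0M : j0 < M := ltn_ord j0.
have hsplit : \sum_(l : 'I_M | rd M j0 l < t.+1) n l = \sum_(l : 'I_M | rd M j0 l < t) n l + n i.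
  rewrite (bigD1 i) /=; last by rewrite rdi.
  rewrite addnC; congr (_ + _); apply: eq_bigl => l.
  apply/idP/idP.
    case/andP => h1 h2; rewrite ltn_neqAle -ltnS h1 andbT; apply/negP => /eqP h3.
    move/negP: h2; apply; apply/eqP; apply: val_inj; apply: (@rd_inj M j0) => //.
    exact: ltn_ord. by rewrite rdi.
  move=> h; rewrite ltnS ltnW //=; apply/negP => /eqP e; by move: h; rewrite e rdi ltnn.
have P1 := hj0 t; have P2 := hj0 t.+1.
have hS : [set w : 'I_M * 'I_N | (rd M j0 w.1 <= t) && (w.2 != sqq)]
   \subset [set w | ~~ beats_t (@pref M N) t w C (i, q)].
  apply/subsetP => w; rewrite !inE => /andP [hw1 hw2].
  rewrite /beats_t -ltnNge.
  have w1M : w.1 < M := ltn_ord _.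
  have w2N : w.2 < N := ltn_ord _.
  have e1 : rd M w.1 i = t - rd M j0 w.1.
    by rewrite (@rd_sub M j0) // rdi.
  have hX : [set c in C | @pref M N w c (i, q)] \subset
      [set c in C | rd M j0 c.1 < t] :|: ([set c in C | c.1 == i] :\ (i, sqq)).
    apply/subsetP => c; rewrite !inE => /andP [cC].
    rewrite /pref /key /=.
    have c1M : c.1 < M := ltn_ord _.
    have c2N : c.2 < N := ltn_ord _.
    have b1 := @rd_lt N w.2 c.2 w2N c2N.
    have b2 := @rd_lt N w.2 q w2N (ltn_ord _).
    case: (ltnP (rd M w.1 c.1) (rd M w.1 i)) => hc hkey.
      apply/orP; left; rewrite cC /=.
      have hc' : rd M w.1 c.1 < t - rd M j0 w.1 by rewrite -e1.
      rewrite (@rd_add M j0 w.1) //; move: hw1 hc' tM; move: (rd M j0 w.1) (rd M w.1 c.1) => x y; lia.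
    have hkey' : rd M w.1 c.1 * N + rd N w.2 c.2 < rd M w.1 i * N + rd N w.2 q := hkey.
    have heq : rd M w.1 c.1 = rd M w.1 i.
      apply/eqP; rewrite eqn_leq hc andbT leqNgt; apply/negP => hlt.
      have : (rd M w.1 i).+1 * N <= rd M w.1 c.1 * N by rewrite leq_mul2r hlt orbT.
      rewrite mulSn; move: hkey' b1 b2.
      move: (rd M w.1 i * N) (rd M w.1 c.1 * N) (rd N w.2 c.2) (rd N w.2 q) => x y z u; lia.
    have ci : c.1 = i by apply: val_inj; apply: (@rd_inj M w.1).
    rewrite heq in hkey'.
    have h2 : rd N w.2 c.2 < rd N w.2 q.
      move: hkey'; move: (rd M w.1 i * N) (rd N w.2 c.2) (rd N w.2 q) => x y z; lia.
    apply/orP; right; rewrite cC ci eqxx !andbT.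
    apply/negP => /eqP ec; move: h2; rewrite ec /=.
    by rewrite /sqq /sq /= rd_succ ?ltn_ord // ltnNge leqnSn.
  have cX := subset_leq_card hX.
  have cU := (leq_card_setU [set c in C | rd M j0 c.1 < t] ([set c in C | c.1 == i] :\ (i, sqq))).1.
  have cY : #|[set c in C | rd M j0 c.1 < t]| = \sum_(l < M | rd M j0 l < t) n l :=
    card_cl C (fun l => rd M j0 l < t).
  have P1' : \sum_(l < M | rd M j0 l < t) n l < t by apply: P1; lia.
  have P2' : \sum_(l < M | rd M j0 l < t) n l + n i < t.+1 by rewrite -hsplit; apply: P2; lia.
  have cD := cardsD1 (i, sqq) [set c in C | c.1 == i].
  have cZ : #|[set c in C | c.1 == i] :\ (i, sqq)| <= n i - 1.
    case: (posnP (n i)) => [n0 | npos].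
      move: cD; rewrite -/(n i) n0; move: (_ \in _) (#|_ :\ _|) => b x; case: b => /=; lia.
    have : (i, sqq) \in [set c in C | c.1 == i] by rewrite inE hq2 // eqxx.
    by move: cD; rewrite -/(n i) => -> ->; rewrite add1n subn1.
  rewrite cY in cU.
  move: cX cU cZ P1' P2'.
  move: (#|[set c in C | pref M N w c (i, q)]|) (#|[set c in C | rd M j0 c.1 < t] :|: [set c in C | c.1 == i] :\ (i, sqq)|) (#|[set c in C | c.1 == i] :\ (i, sqq)|) (\sum_(l < M | rd M j0 l < t) n l) (n i) => x y z u v; lia.
have cS : #|[set w : 'I_M * 'I_N | (rd M j0 w.1 <= t) && (w.2 != sqq)]| = t.+1 * N.-1.
  have -> : [set w : 'I_M * 'I_N | (rd M j0 w.1 <= t) && (w.2 != sqq)] =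
      setX [set j : 'I_M | rd M j0 j <= t] [set~ sqq].
    by apply/setP => w; rewrite !inE.
  rewrite cardsX cardsC1 card_ord; congr (_ * _).
  have eM : forall e : 'I_t.+1, e < M by move=> e; have := ltn_ord e; lia.
  have fl : forall e : 'I_t.+1, rot M j0 e < M by move=> e; apply: rot_lt.
  pose f (e : 'I_t.+1) : 'I_M := Ordinal (fl e).
  have finj : injective f.
    move=> e e' /(congr1 (fun x : 'I_M => rd M j0 x)) /=.
    by rewrite !rd_rot // => h; apply: val_inj.
  have -> : [set j : 'I_M | rd M j0 j <= t] = f @: [set: 'I_t.+1].
    apply/setP => j; rewrite inE; apply/idP/imsetP.
      move=> hj; have hj' : rd M j0 j < t.+1 by [].
      exists (Ordinal hj'); first by rewrite inE.
      by apply: val_inj; rewrite /= rot_rd.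
    by move=> [e _ ->] /=; rewrite rd_rot // -ltnS.
  by rewrite card_imset // cardsT card_ord.
rewrite -cS; exact: subset_leq_card hS.
Qed.
Unset Implicit Arguments. Set Strict Implicit.

Theorem theorem3 (R : realType) (t k : nat) (alpha : R) :
  1 <= t -> t <= k ->
  (0 <= alpha)%R -> (alpha < t.+1%:R / k.+1%:R)%R ->
  exists (V A : finType) (pref : V -> rel A),
    [/\ 0 < #|V|, (forall v : V, strict_linear_order (pref v)), k <= #|A|
      & forall C : {set A}, #|C| = k -> ~ undominated pref t alpha C].
Proof.
move=> t1 tk a0 aless.
have Mpos : (0 < k.+1%:R :> R)%R by rewrite ltr0n.
have h1 : (alpha * k.+1%:R < t.+1%:R)%R by rewrite -ltr_pdivlMr.
pose d := (t.+1%:R - alpha * k.+1%:R : R)%R.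
have dpos : (0 < d)%R by rewrite subr_gt0.
pose N := (Num.Def.trunc (t.+1%:R / d : R)).+1 + k.+1.
have hN : (t.+1%:R / d < N%:R :> R)%R.
  apply: (lt_le_trans (truncnS_gt _)); rewrite ler_nat /N; exact: leq_addr.
have kN : k.+1 < N by rewrite /N; lia.
exists ('I_k.+1 * 'I_N)%type, ('I_k.+1 * 'I_N)%type, (@pref k.+1 N); split.
- by rewrite card_prod !card_ord muln_gt0 /=; lia.
- exact: pref_slo.
- rewrite card_prod !card_ord; nia.
move=> C hC [_ hund].
have [a [aC hbad]] := bad_bound t1 tk kN hC.
have := hund a aC.
rewrite card_prod !card_ord => hfl.
have : ((t.+1 * N.-1)%:Z <= Num.floor (alpha * (k.+1 * N)%:R))%R.
  apply: le_trans hfl; rewrite lez_nat; exact: hbad.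
rewrite floor_ge_int -pmulrn.
have hN' : (t.+1%:R < N%:R * d :> R)%R by rewrite -ltr_pdivrMr.
have eN : (N.-1%:R = N%:R - 1 :> R)%R.
  rewrite -[X in (_ = X%:R - _)%R](prednK (n:=N)); last by lia.
  by rewrite -addn1 natrD addrK.
rewrite natrM.
have eL : ((t.+1 * N.-1)%:R = t.+1%:R * (N%:R - 1) :> R)%R by rewrite natrM eN.
rewrite eL.
move: hN'; rewrite /d.
move: (t.+1%:R : R)%R (N%:R : R)%R (k.+1%:R : R)%R => x y z hh hh2.
nra.
Qed.
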